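(* Let $T$ be a sparse tournament of order $n>4$ and let $\sigma$ be a sparse ordering of $V(T)$. Then for every vertex $v$ with $d^-(v)=i$, the position of $v$ in $\sigma$ (positions numbered $1,\dots,n$) belongs to $\{i,i+1,i+2\}\cap[n]$.
   Context: A tournament is a digraph with exactly one arc between each pair of distinct vertices; $d^-(v)$ is the in-degree of $v$ and $[n]=\{1,\dots,n\}$. For an ordering $\sigma$ of $V(T)$, an arc $(x,y)$ is backward if $y$ precedes $x$ in $\sigma$. An ordering is sparse if every vertex is incident to at most one backward arc; a tournament is sparse if it admits a sparse ordering. *)

(* Defs.v *)
From mathcomp Require Import all_boot.
Set Implicit Arguments. Unset Strict Implicit. Unset Printing Implicit Defensive.

Definition is_tournament (V : finType) (arc : rel V) : Prop :=
  (forall x, ~~ arc x x) /\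
  (forall x y, x != y -> (arc x y && ~~ arc y x) || (arc y x && ~~ arc x y)).

Definition indeg (V : finType) (arc : rel V) (v : V) : nat :=
  #|[set u | arc u v]|.

(* An ordering of V is an injective (hence bijective) map to positions
   0..#|V|-1 (0-based; position p corresponds to position p+1 in the paper). *)
Definition is_ordering (V : finType) (pos : V -> 'I_#|V|) : Prop :=
  injective pos.

Definition backward (V : finType) (arc : rel V) (pos : V -> 'I_#|V|) (x y : V) : bool :=
  arc x y && (pos y < pos x).

(* Backward arcs incident to v, represented by their other endpoint. *)
Definition backward_nbrs (V : finType) (arc : rel V) (pos : V -> 'I_#|V|) (v : V) : {set V} :=
  [set u | backward arc pos v u || backward arc pos u v].

Definition sparse_ordering (V : finType) (arc : rel V) (pos : V -> 'I_#|V|) : Prop :=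
  is_ordering pos /\ forall v, #|backward_nbrs arc pos v| <= 1.

Definition sparse_tournament (V : finType) (arc : rel V) : Prop :=
  exists pos : V -> 'I_#|V|, sparse_ordering arc pos.

(* Main.v *)
Require Import Defs.
From mathcomp Require Import all_boot.

Lemma card_lt_ord n (k : 'I_n) : #|[set j : 'I_n | j < k]| = k.
Proof.
have hk : k <= n by apply: ltnW.
have -> : [set j : 'I_n | j < k] = [set widen_ord hk x | x : 'I_k].
  apply/setP => j; rewrite inE; apply/idP/imsetP.
  - move=> lt; exists (Ordinal lt) => //; by apply: val_inj.
  - by case=> x _ ->; rewrite /= ltn_ord.
rewrite card_imset ?card_ord // => x y /(congr1 val) /= xy; exact: val_inj.
Qed.

Theorem mainTheorem10 (V : finType) (arc : rel V) (pos : V -> 'I_#|V|) :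
  is_tournament arc ->
  sparse_tournament arc ->
  4 < #|V| ->
  sparse_ordering arc pos ->
  forall v : V, forall i : nat, indeg arc v = i ->
    i <= (pos v).+1 <= i + 2 /\ 1 <= (pos v).+1 <= #|V|.
Proof.
move=> [irr tot] _ _ [inj sp] v i <-.
split; last by rewrite ltn_ord.
set A := [set u | arc u v].
set B := [set u | pos u < pos v].
have hB : #|B| = pos v.
  have bij : bijective pos by apply: inj_card_bij => //; rewrite card_ord.
  rewrite -[in RHS](@card_lt_ord #|V| (pos v)) -(on_card_preimset (f := pos) (R := mem [set j : 'I_#|V| | j < pos v])).
    by apply: eq_card => u; rewrite !inE.
  by apply: onW_bij.
have hN := sp v.
have h1 : A :\: B \subset backward_nbrs arc pos v.
  apply/subsetP => u; rewrite !inE /backward => /andP [nB auv].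
  have uv : u != v by apply: contraTneq auv => ->; rewrite irr.
  have : pos u != pos v by apply: contra uv => /eqP/inj ->.
  move=> neq; rewrite -leqNgt in nB.
  rewrite auv /=; apply/orP; right.
  by rewrite ltn_neqAle nB andbT eq_sym.
have h2 : B :\: A \subset backward_nbrs arc pos v.
  apply/subsetP => u; rewrite !inE /backward => /andP [nA uB].
  have uv : u != v by apply: contraTneq uB => ->; rewrite ltnn.
  move: (tot _ _ uv); rewrite (negbTE nA) /= andbT orbF => avu.
  by rewrite avu uB.
have c1 := subset_leq_card h1.
have c2 := subset_leq_card h2.
have e1 := cardsID B A.
have e2 := cardsID A B.
have s1 : #|A :&: B| <= #|B| by apply: subset_leq_card; apply: subsetIr.
have s2 : #|B :&: A| <= #|A| by apply: subset_leq_card; apply: subsetIr.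
rewrite /indeg -/A -hB.
apply/andP; split.
- rewrite -e1 -addn1; exact: leq_add s1 (leq_trans c1 hN).
- rewrite -e2 addn2 ltnS -addn1; exact: leq_add s2 (leq_trans c2 hN).
Qed.
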